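(* Let $\epsilon,\delta,\tau>0$ and set $r_{max}=\frac{\epsilon\delta}{m\tau}$. For any source supernode $\mathcal V_i\in\mathcal S$, the procedure GFP$(G,\mathcal S,\mathcal V_i,r_{max})$ terminates, and its output $\hat\pi_d(\mathcal V_i,\mathcal V_j)$ is an $(\epsilon,\delta)$-approximation of $\pi_d(\mathcal V_i,\mathcal V_j)$ for every $\mathcal V_j\in\mathcal S$ with $\tau_j\le\tau$.
   Context: $G=(V,E)$ is a directed graph with $n$ nodes and $m$ edges, no self-loops, and every node of out-degree $d(v)\ge1$; $\alpha\in(0,1)$. PPR $\pi(u,v)$: probability that a random walk from $u$ which at each step stops with probability $\alpha$ and otherwise moves to a uniformly random out-neighbor stops at $v$; $\pi_d(u,v)=d(u)\pi(u,v)$. A collection $\mathcal S=\{\mathcal V_1,\dots,\mathcal V_k\}$ of supernodes is given, each $\mathcal V_i$ having a nonempty leaf set $F(\mathcal V_i)\subseteq V$, the leaf sets being pairwise disjoint. For supernodes, $\pi_d(\mathcal V_i,\mathcal V_j)=\frac{1}{|F(\mathcal V_i)||F(\mathcal V_j)|}\sum_{v_s\in F(\mathcal V_i),v_t\in F(\mathcal V_j)}\pi_d(v_s,v_t)$. The degree-normalized PageRank of $\mathcal V_j$ is $\tau_j=\frac{1}{m|F(\mathcal V_j)|}\sum_{v_t\in F(\mathcal V_j)}\sum_{v_k\in V}\pi_d(v_k,v_t)$. A value $\hat x$ is an $(\epsilon,\delta)$-approximation of $x\ge0$ if $|\hat x-x|\le\epsilon\delta$ when $x<\delta$, and $|\hat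 x-x|\le\epsilon x$ when $x\ge\delta$. Procedure GFP$(G,\mathcal S,\mathcal V_i,r_{max})$: set $\hat\pi_d(\mathcal V_i,\mathcal V_j)=0$ for all $\mathcal V_j\in\mathcal S$; set $r(\mathcal V_i,v)=d(v)/|F(\mathcal V_i)|$ for $v\in F(\mathcal V_i)$ and $0$ otherwise. While some $v_k\in V$ has $r(\mathcal V_i,v_k)>d(v_k)\,r_{max}$, pick any such $v_k$ and: if $v_k\in F(\mathcal V_j)$ for some $\mathcal V_j\in\mathcal S$, add $\alpha\,r(\mathcal V_i,v_k)/|F(\mathcal V_j)|$ to $\hat\pi_d(\mathcal V_i,\mathcal V_j)$; for each out-neighbor $v_j$ of $v_k$ add $(1-\alpha)\,r(\mathcal V_i,v_k)/d(v_k)$ to $r(\mathcal V_i,v_j)$; then set $r(\mathcal V_i,v_k)=0$. Output the values $\hat\pi_d(\mathcal V_i,\cdot)$. *)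

(* Defs.v *)
From HB Require Import structures.
From mathcomp Require Import all_boot all_order all_algebra.
From mathcomp Require Import all_classical all_reals all_analysis.
From Stdlib Require Import Relations.
Set Implicit Arguments. Unset Strict Implicit. Unset Printing Implicit Defensive.
Import Order.TTheory GRing.Theory Num.Theory numFieldNormedType.Exports.
Local Open Scope ring_scope.

Section Defs.
Variables (R : realType) (V : finType) (E : rel V) (alpha : R).

Definition outdeg (v : V) : nat := #|[set w | E v w]|.

Definition nedges : nat := #|[set p : V * V | E p.1 p.2]|.

Fixpoint walkp (t : nat) (u v : V) : R :=
  match t with
  | 0%N => (u == v)%:R
  | t'.+1 => \sum_(w | E u w) (outdeg u)%:R^-1 * walkp t' w v
  end.

(* PPR: probability that the alpha-terminating walk from u stops at v,
   i.e. sum over the stopping time t of alpha (1-alpha)^t P^t(u,v). *)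
Definition ppr (u v : V) : R :=
  limn (series (fun t => alpha * (1 - alpha) ^+ t * walkp t u v)).

Definition pprd (u v : V) : R := (outdeg u)%:R * ppr u v.

Variables (I : finType) (F : I -> {set V}).

Definition spprd (i j : I) : R :=
  (#|F i|%:R * #|F j|%:R)^-1 *
  \sum_(vs in F i) \sum_(vt in F j) pprd vs vt.

Definition spr (j : I) : R :=
  (nedges%:R * #|F j|%:R)^-1 * \sum_(vt in F j) \sum_(vk : V) pprd vk vt.

(* GFP state: estimates hat(pi_d)(V_i, .) and residues r(V_i, .) *)
Definition gfp_state := ((I -> R) * (V -> R))%type.

Definition gfp_init (i : I) : gfp_state :=
  (fun _ => 0, fun v => if v \in F i then (outdeg v)%:R / #|F i|%:R else 0).

Definition gfp_push (s : gfp_state) (vk : V) : gfp_state :=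
  let: (h, r) := s in
  (fun j => h j + (if vk \in F j then alpha * r vk / #|F j|%:R else 0),
   fun w => if w == vk then 0
            else r w + (if E vk w then (1 - alpha) * r vk / (outdeg vk)%:R else 0)).

Definition gfp_active (rmax : R) (s : gfp_state) (vk : V) : Prop :=
  s.2 vk > (outdeg vk)%:R * rmax.

Definition gfp_step (rmax : R) (s s' : gfp_state) : Prop :=
  exists vk, gfp_active rmax s vk /\ s' = gfp_push s vk.

(* GFP terminates from state s whatever choices are made:
   there is no infinite sequence of loop iterations *)
Definition gfp_terminates (rmax : R) (s : gfp_state) : Prop :=
  Acc (fun y x => gfp_step rmax x y) s.

Definition gfp_output (rmax : R) (i : I) (s : gfp_state) : Prop :=
  clos_refl_trans gfp_state (gfp_step rmax) (gfp_init i) s /\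
  (forall vk, ~ gfp_active rmax s vk).

End Defs.

Definition ed_approx (R : realType) (eps delta xh x : R) : Prop :=
  if x < delta then `|xh - x| <= eps * delta else `|xh - x| <= eps * x.

(* Main.v *)
Require Import Defs.
From mathcomp Require Import all_boot all_order all_algebra.
From mathcomp Require Import all_classical all_reals all_analysis.
From mathcomp Require Import ring lra.
From Stdlib Require Import Relations.
Import Order.TTheory GRing.Theory Num.Theory numFieldNormedType.Exports.
Local Open Scope ring_scope.

Section Aux.
Variables (R : realType) (V : finType) (E : rel V) (alpha : R).
Hypothesis dpos : forall v, (0 < outdeg E v)%N.
Hypothesis a01 : 0 < alpha < 1.

Lemma sum_Ecst (u : V) (c : R) : \sum_(w | E u w) c = c *+ outdeg E u.
Proof. by rewrite sumr_const /outdeg cardsE. Qed.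

Lemma walkp_ge0 t u v : 0 <= walkp R E t u v.
Proof.
elim: t u => [|t IH] u /=; first by rewrite ler0n.
by apply: sumr_ge0 => w _; rewrite mulr_ge0 ?invr_ge0 ?ler0n.
Qed.

Lemma walkp_le1 t u v : walkp R E t u v <= 1.
Proof.
elim: t u => [|t IH] u /=; first by rewrite lern1 leq_b1.
apply: le_trans (_ : \sum_(w | E u w) (outdeg E u)%:R^-1 <= _).
  by apply: ler_sum => w _; rewrite ler_piMr ?invr_ge0 ?ler0n.
rewrite sum_Ecst -(mulr_natl (_^-1)) mulfV // pnatr_eq0 -lt0n; exact: dpos.
Qed.

Definition ft (u v : V) (t : nat) : R := alpha * (1 - alpha) ^+ t * walkp R E t u v.

Lemma ft_ge0 u v t : 0 <= ft u v t.
Proof.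
case/andP: a01 => a0 a1.
by rewrite /ft !mulr_ge0 ?exprn_ge0 ?walkp_ge0 ?subr_ge0 // ltW.
Qed.

Lemma ser_cvg u v : cvgn (series (ft u v)).
Proof.
case/andP: a01 => a0 a1.
apply: nondecreasing_is_cvgn.
  move=> m n mn; rewrite /series /=.
  rewrite (big_cat_nat (leq0n m) mn) /= lerDl.
  by apply: sumr_ge0 => k _; exact: ft_ge0.
exists 1 => y [n _ <-].
apply: le_trans (_ : series (geometric alpha (1 - alpha)) n <= _).
  rewrite /series /=; apply: ler_sum => k _.
  rewrite /ft /geometric /= ler_piMr ?walkp_le1 //.
  by rewrite mulr_ge0 ?exprn_ge0 ?subr_ge0 // ltW.
apply: le_trans (geometric_le_lim _ _ _ _) _.
- exact: ltW.
- by rewrite subr_gt0.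
- by rewrite ger0_norm ?subr_ge0 ?ltW // ltrBlDr ltrDl.
by rewrite opprB addrCA subrr addr0 divff // gt_eqF.
Qed.

Lemma sum_cvg (s : seq V) (P : pred V) (g : V -> nat -> R) (l : V -> R) :
  (forall w, g w n @[n --> \oo] --> l w)%classic ->
  ((\sum_(w <- s | P w) g w n) @[n --> \oo] --> \sum_(w <- s | P w) l w)%classic.
Proof.
move=> H; elim: s => [|a s IH].
  have -> : (fun n => \sum_(w <- [::] | P w) g w n) = (fun n => 0).
    by apply: funext => n; rewrite big_nil.
  by rewrite big_nil; exact: cvg_cst.
have -> : (fun n => \sum_(w <- a :: s | P w) g w n) =
   (fun n => (if P a then g a n else 0) + \sum_(w <- s | P w) g w n).
  by apply: funext => n; rewrite big_cons; case: (P a); rewrite ?add0r.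
rewrite big_cons.
have -> : (if P a then l a + \sum_(j <- s | P j) l j else \sum_(j <- s | P j) l j)
   = (if P a then l a else 0) + \sum_(j <- s | P j) l j.
  by case: (P a); rewrite ?add0r.
apply: cvgD => //; case: (P a) => //; exact: cvg_cst.
Qed.

Lemma ser_step u v n : series (ft u v) n.+1 = alpha * (u == v)%:R +
  (1 - alpha) * (outdeg E u)%:R^-1 * \sum_(w | E u w) series (ft w v) n.
Proof.
rewrite /series /= big_nat_recl // {1}/ft /= expr0 mulr1; congr (_ + _).
rewrite mulr_sumr (eq_bigr (fun w => \sum_(0 <= k < n)
   (1 - alpha) / (outdeg E u)%:R * ft w v k)); last by move=> w _; rewrite mulr_sumr.
rewrite exchange_big /=; apply: eq_bigr => k _.
rewrite /ft /= mulr_sumr; apply: eq_bigr => w _.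
rewrite exprS; ring.
Qed.

Lemma ppr_push u v : ppr E alpha u v = alpha * (u == v)%:R +
  (1 - alpha) * (outdeg E u)%:R^-1 * \sum_(w | E u w) ppr E alpha w v.
Proof.
apply: cvg_lim => //.
rewrite -cvg_shiftS /=.
have -> : (fun n => series (ft u v) n.+1) = (fun n => alpha * (u == v)%:R +
  (1 - alpha) * (outdeg E u)%:R^-1 * \sum_(w | E u w) series (ft w v) n).
  by apply: funext => n; rewrite ser_step.
apply: cvgD; first exact: cvg_cst.
apply: cvgMr; apply: sum_cvg => w; exact: ser_cvg.
Qed.

Lemma ppr_ge0 u v : 0 <= ppr E alpha u v.
Proof.
apply: limr_ge; first exact: ser_cvg.
near=> n; apply: sumr_ge0 => k _; exact: ft_ge0.
Unshelve. all: by end_near.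
Qed.

Hypothesis noloop : forall v, ~~ E v v.
Variables (I : finType) (F : I -> {set V}).

Definition Q (j : I) (v : V) : R := #|F j|%:R^-1 * \sum_(vt in F j) ppr E alpha v vt.

Lemma sum_eq_in (A : {set V}) (vk : V) :
  \sum_(vt in A) ((vk == vt)%:R : R) = (vk \in A)%:R.
Proof.
case: (boolP (vk \in A)) => H.
  rewrite (bigD1 vk) //= eqxx big1 ?addr0 // => w /andP[_ /negbTE].
  by rewrite eq_sym => ->.
apply: big1 => w wA; case: eqP => // e; subst; by rewrite wA in H.
Qed.

Lemma Q_ge0 j v : 0 <= Q j v.
Proof.
by rewrite /Q mulr_ge0 ?invr_ge0 ?ler0n // sumr_ge0 // => vt _; exact: ppr_ge0.
Qed.

Lemma Q_push j vk : Q j vk = alpha * (vk \in F j)%:R / #|F j|%:R +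
  (1 - alpha) * (outdeg E vk)%:R^-1 * \sum_(w | E vk w) Q j w.
Proof.
rewrite /Q (@eq_bigr _ _ _ _ _ _ _ (fun vt => alpha * (vk == vt)%:R +
  (1 - alpha) * (outdeg E vk)%:R^-1 * \sum_(w | E vk w) ppr E alpha w vt));
  last by move=> vt _; exact: ppr_push.
rewrite big_split /=.
rewrite -mulr_sumr sum_eq_in -mulr_sumr mulrDr.
congr (_ + _); first ring.
rewrite exchange_big /= -mulr_sumr mulrCA; congr (_ * _); rewrite mulr_sumr; apply: eq_bigr => w _.
Qed.

Lemma push_sum (s : gfp_state R V I) vk (g : V -> R) :
  \sum_v (gfp_push E alpha F s vk).2 v * g v =
  \sum_v s.2 v * g v - s.2 vk * g vk +
  (1 - alpha) * s.2 vk / (outdeg E vk)%:R * \sum_(v | E vk v) g v.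
Proof.
case: s => h r /=.
set c := (1 - alpha) * r vk / (outdeg E vk)%:R.
rewrite (eq_bigr (fun v => r v * g v - (if v == vk then r vk * g vk else 0)
   + (if E vk v then c * g v else 0))); last first.
  move=> v _; case: eqP => [->|_]; first by rewrite (negbTE (noloop vk)); ring.
  by case: (E vk v); ring.
rewrite big_split sumrB /= -!big_mkcond big_pred1_eq /= mulr_sumr //.
Qed.

Variable (i : I).

Definition Inv (s : gfp_state R V I) : Prop :=
  (forall v, 0 <= s.2 v) /\
  forall j, spprd E alpha F i j = s.1 j + \sum_v s.2 v * Q j v.

Lemma Inv_init : Inv (gfp_init R E F i).
Proof.
split => [v|j] /=.
  by case: (v \in F i); rewrite ?divr_ge0 ?ler0n.
rewrite add0r /spprd.
rewrite [X in _ = X](eq_bigr (fun v => if v \in F i then (outdeg E v)%:R / #|F i|%:R * Q j v else 0));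
  last by move=> v _; case: (v \in F i); rewrite ?mul0r.
rewrite -big_mkcond /= mulr_sumr; apply: eq_bigr => v _.
rewrite /Q /pprd -mulr_sumr invfM; ring.
Qed.

Lemma Inv_step rmax s s' : 0 <= rmax -> Inv s -> gfp_step E alpha F rmax s s' -> Inv s'.
Proof.
move=> r0 [nn eq] [vk [act ->]].
have rvk : 0 <= s.2 vk.
  apply: le_trans (ltW act); by rewrite mulr_ge0 ?ler0n.
have a1 : 0 <= 1 - alpha by case/andP: a01 => _ /ltW; rewrite subr_ge0.
split => [v|j].
  case: s nn eq act rvk => h r /= nn _ _ rvk.
  case: eqP => // _; rewrite addr_ge0 //; case: (E vk v) => //.
  by rewrite divr_ge0 ?ler0n ?mulr_ge0.
rewrite push_sum eq (Q_push j vk).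
case: s {nn eq act} rvk => h r /= rvk.
case: (vk \in F j) => /=; ring.
Qed.

Lemma Inv_bound rmax s j : Inv s -> (forall v, s.2 v <= (outdeg E v)%:R * rmax) ->
  (0 < nedges E)%N ->
  0 <= spprd E alpha F i j - s.1 j <= rmax * ((nedges E)%:R * spr E alpha F j).
Proof.
move=> [nn eq] le m0; rewrite eq addrAC subrr add0r; apply/andP; split.
  by apply: sumr_ge0 => v _; rewrite mulr_ge0 ?Q_ge0.
apply: le_trans (_ : \sum_v (outdeg E v)%:R * rmax * Q j v <= _).
  by apply: ler_sum => v _; rewrite ler_wpM2r ?Q_ge0.
have -> : (nedges E)%:R * spr E alpha F j =
   #|F j|%:R^-1 * \sum_(vt in F j) \sum_v pprd E alpha v vt.
  rewrite /spr invfM mulrA mulrA mulfV ?mul1r // pnatr_eq0 -lt0n //.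
rewrite exchange_big /= mulr_sumr mulr_sumr; apply: ler_sum => v _.
rewrite /Q /pprd -mulr_sumr le_eqVlt; apply/orP; left; apply/eqP; ring.
Qed.

Lemma nn_step rmax s s' : 0 <= rmax -> (forall v, 0 <= s.2 v) ->
  gfp_step E alpha F rmax s s' -> forall v, 0 <= s'.2 v.
Proof.
move=> r0 nn [vk [act ->]].
have rvk : 0 <= s.2 vk.
  apply: le_trans (ltW act); by rewrite mulr_ge0 ?ler0n.
have a1 : 0 <= 1 - alpha by case/andP: a01 => _ /ltW; rewrite subr_ge0.
move=> v; case: s nn act rvk => h r /= nn _ rvk.
case: eqP => // _; rewrite addr_ge0 //; case: (E vk v) => //.
by rewrite divr_ge0 ?ler0n ?mulr_ge0.
Qed.

Lemma sum_step s vk : \sum_v (gfp_push E alpha F s vk).2 v =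
  \sum_v s.2 v - alpha * s.2 vk.
Proof.
rewrite (eq_bigr (fun v => (gfp_push E alpha F s vk).2 v * 1)); last by move=> *; rewrite mulr1.
rewrite push_sum sum_Ecst.
under [X in _ = X - _]eq_bigr do rewrite -[s.2 _]mulr1.
have d0 : (outdeg E vk)%:R != 0 :> R by rewrite pnatr_eq0 -lt0n.
by rewrite -mulr_natr mul1r; field.
Qed.

Lemma term rmax : 0 < rmax -> forall s, (forall v, 0 <= s.2 v) ->
  gfp_terminates E alpha F rmax s.
Proof.
move=> r0.
case/andP: a01 => a0 a1.
have c0 : 0 < alpha * rmax by rewrite mulr_gt0.
suff H : forall n s, (forall v, 0 <= s.2 v) -> \sum_v s.2 v < n%:R * (alpha * rmax) ->
    gfp_terminates E alpha F rmax s.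
  move=> s nn; apply: (H (Num.Def.archi_bound ((\sum_v s.2 v) / (alpha * rmax)))) => //.
  rewrite -ltr_pdivrMr //; apply: archi_boundP.
  by apply: divr_ge0; [apply: sumr_ge0 => v _; exact: nn | exact: ltW].
elim=> [|n IH] s nn lt.
  by move: lt; rewrite mul0r ltNge sumr_ge0.
constructor => s' st.
have nn2 := @nn_step _ _ _ (ltW r0) nn st; apply: IH => //.
case: st => vk [act ->]; rewrite sum_step.
have d1 : 1 <= (outdeg E vk)%:R :> R by rewrite ler1n.
move: lt act; rewrite /gfp_active mulrSr => lt act.
have : rmax <= (outdeg E vk)%:R * rmax by rewrite ler_peMl // ltW.
nra.
Qed.
End Aux.

Theorem lemma2 (R : realType) (V : finType) (E : rel V) (alpha : R)
  (I : finType) (F : I -> {set V}) (eps delta tau : R) :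
  (forall v, ~~ E v v) ->
  (forall v, (0 < outdeg E v)%N) ->
  0 < alpha < 1 ->
  (forall i, F i != finset.set0) ->
  (forall i j, i != j -> [disjoint F i & F j]) ->
  0 < eps -> 0 < delta -> 0 < tau ->
  let rmax := eps * delta / ((nedges E)%:R * tau) in
  forall i : I,
    gfp_terminates E alpha F rmax (gfp_init R E F i) /\
    (forall s, gfp_output E alpha F rmax i s ->
       forall j, spr E alpha F j <= tau ->
         ed_approx eps delta (s.1 j) (spprd E alpha F i j)).
Proof.
move=> noloop dpos a01 Fne _ e0 d0 t0 rmax i.
have m0 : (0 < nedges E)%N.
  have /set0Pn [v vi] := Fne i.
  have /card_gt0P [w] : (0 < #|[set w | E v w]|)%N by exact: dpos.
  rewrite inE => evw.
  apply/card_gt0P; exists (v, w); by rewrite inE.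
have r0 : 0 < rmax.
  by rewrite /rmax divr_gt0 ?mulr_gt0 // ltr0n.
split.
  apply: (@term R V E alpha dpos a01 noloop I F rmax r0); exact: (Inv_init R V E alpha I F i).1.
move=> s [reach final] j tj.
have gen : forall x y, clos_refl_trans _ (gfp_step E alpha F rmax) x y ->
    Inv R V E alpha I F i x -> Inv R V E alpha I F i y.
  move=> x y; elim => [a b st|a|a b c _ IH1 _ IH2].
  - move=> Ia; exact: (@Inv_step R V E alpha dpos a01 noloop I F i rmax a b (ltW r0) Ia st).
  - by [].
  - by move=> Ia; apply: IH2; apply: IH1.
have Is := gen _ _ reach (Inv_init R V E alpha I F i).
have le : forall v, s.2 v <= (outdeg E v)%:R * rmax.
  by move=> v; rewrite leNgt; apply/negP => H; apply: (final v).
have /andP [lo hi] := @Inv_bound R V E alpha dpos a01 I F i rmax s j Is le m0.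
have hb : rmax * ((nedges E)%:R * spr E alpha F j) <= eps * delta.
  have mn : (nedges E)%:R != 0 :> R by rewrite pnatr_eq0 -lt0n.
  have -> : rmax * ((nedges E)%:R * spr E alpha F j) =
      eps * delta * (spr E alpha F j / tau).
    by rewrite /rmax; field; rewrite mn /= gt_eqF.
  rewrite -[X in _ <= X]mulr1; apply: ler_wpM2l; first by rewrite mulr_ge0 // ltW.
  by rewrite ler_pdivrMr // mul1r.
rewrite /ed_approx distrC ger0_norm //.
case: ifP => H; first exact: le_trans hi hb.
apply: (le_trans hi); apply: (le_trans hb).
apply: ler_wpM2l; first exact: ltW.
by rewrite leNgt H.
Qed.
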